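(* Let $\mathcal{X}$ be a finite set, $\pi$ a probability mass function on $\mathcal{X}$ with full support, and $P$ a $\pi$-stationary transition matrix on $\mathcal{X}$. Let a group $\mathcal{G}$ act on $\mathcal{X}$ with orbits $\mathcal{O}_1,\dots,\mathcal{O}_k$, and let $G$ be the associated Gibbs orbit kernel. For each $i\in\{1,\dots,k\}$, the restriction chain $(GPG)_i$ on $\mathcal{O}_i$ has eigenvalues $\lambda_1=1$ and $\lambda_2=1-\overline{a}_i$, where $a_i(x):=\sum_{y\in\mathcal{O}_i}P(x,y)$ and $\overline{a}_i:=\sum_{x\in\mathcal{O}_i}\frac{\pi(x)}{\pi(\mathcal{O}_i)}\sum_{y\in\mathcal{O}_i}P(x,y)$.
   Context: The Gibbs orbit kernel is $G(x,y)=\pi(y)/\pi(\mathcal{O}(x))$ if $y\in\mathcal{O}(x)$ (the orbit of $x$), and $0$ otherwise, where $\pi(A)=\sum_{z\in A}\pi(z)$. For a transition matrix $K$ on $\mathcal{X}$, the restriction chain $K_i$ on $\mathcal{O}_i$ is the matrix on $\mathcal{O}_i\times\mathcal{O}_i$ with $K_i(x,y)=K(x,y)$ for $x\ne y$ and $K_i(x,x)=1-\sum_{z\in\mathcal{O}_i\setminus\{x\}}K(x,z)$. *)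

(* Defs.v *)
From HB Require Import structures.
From mathcomp Require Import all_boot all_order all_algebra all_fingroup.
Set Implicit Arguments. Unset Strict Implicit. Unset Printing Implicit Defensive.
Import Order.TTheory GRing.Theory Num.Theory.
Local Open Scope ring_scope.

Definition massR {R : realFieldType} {X : finType} (pi : X -> R) (A : {set X}) : R :=
  \sum_(z in A) pi z.

Definition kmul {R : realFieldType} {X : finType} (K L : X -> X -> R) : X -> X -> R :=
  fun x y => \sum_z K x z * L z y.

Definition orb {gT : finGroupType} {X : finType} (to : {action gT &-> X}) (x : X) : {set X} :=
  orbit to [set: gT] x.

Definition gibbs_orbit_kernel {R : realFieldType} {gT : finGroupType} {X : finType}
  (to : {action gT &-> X}) (pi : X -> R) : X -> X -> R :=
  fun x y => if y \in orb to x then pi y / massR pi (orb to x) else 0.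

Definition restriction_chain {R : realFieldType} {X : finType} (K : X -> X -> R)
  (O : {set X}) : 'M[R]_#|O| :=
  \matrix_(i < #|O|, j < #|O|)
    let x := enum_val i in let y := enum_val j in
    if i == j then 1 - \sum_(z in O | z != x) K x z else K x y.

Definition abar {R : realFieldType} {X : finType} (pi : X -> R) (P : X -> X -> R)
  (O : {set X}) : R :=
  \sum_(x in O) pi x / massR pi O * \sum_(y in O) P x y.

(* Main.v *)
Require Import Defs.
From HB Require Import structures.
From mathcomp Require Import all_boot all_order all_algebra all_fingroup.
From mathcomp Require Import ring lra zify.
Import Order.TTheory GRing.Theory Num.Theory.
Set Implicit Arguments. Unset Strict Implicit.
Local Open Scope ring_scope.

Lemma orb_eq (gT : finGroupType) (X : finType) (to : {action gT &-> X}) x0 x :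
  x \in orb to x0 -> orb to x = orb to x0.
Proof. by move=> /orbit_eqP. Qed.

Lemma G_val (R : realFieldType) (gT : finGroupType) (X : finType)
  (to : {action gT &-> X}) (pi : X -> R) x0 x y : x \in orb to x0 ->
  gibbs_orbit_kernel to pi x y = if y \in orb to x0 then pi y / massR pi (orb to x0) else 0.
Proof. by move=> hx; rewrite /gibbs_orbit_kernel (orb_eq hx). Qed.

Lemma K_val (R : realFieldType) (gT : finGroupType) (X : finType)
  (to : {action gT &-> X}) (pi : X -> R) (P : X -> X -> R) x0 x y :
  x \in orb to x0 -> y \in orb to x0 ->
  kmul (kmul (gibbs_orbit_kernel to pi) P) (gibbs_orbit_kernel to pi) x y =
  abar pi P (orb to x0) * (pi y / massR pi (orb to x0)).
Proof.
move=> hx hy; set O := orb to x0; set m := massR pi O.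
rewrite /kmul.
have Gw w : gibbs_orbit_kernel to pi w y = if w \in O then pi y / m else 0.
  rewrite /gibbs_orbit_kernel.
  have -> : (y \in orb to w) = (w \in O).
    by rewrite /orb orbit_sym -/(orb to y) (orb_eq hy).
  by case: ifP => // hw; rewrite (orb_eq hw).
rewrite (eq_bigr (fun w => if w \in O then \sum_(z in O) pi z / m * P z w * (pi y / m) else 0)).
  rewrite -big_mkcond /= exchange_big /abar big_distrl /=; apply: eq_bigr => z _.
  by rewrite big_distrr big_distrl /=; apply: eq_bigr => w _; ring.
move=> w _; rewrite Gw; case: ifP => _; last by rewrite mulr0.
rewrite big_distrl [in RHS]big_mkcond /=; apply: eq_bigr => z _.
by rewrite (G_val _ _ hx); case: ifP => _; rewrite ?mul0r.
Qed.

Theorem proposition2p6 (R : realFieldType) (X : finType) (gT : finGroupType)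
  (to : {action gT &-> X}) (pi : X -> R) (P : X -> X -> R)
  (pi_pos : forall x, 0 < pi x)
  (pi_sum : \sum_x pi x = 1)
  (P_nonneg : forall x y, 0 <= P x y)
  (P_row : forall x, \sum_y P x y = 1)
  (P_stat : forall y, \sum_x pi x * P x y = pi y)
  (x0 : X) :
  let O := orb to x0 in
  let G := gibbs_orbit_kernel to pi in
  forall lambda : R,
    eigenvalue (restriction_chain (kmul (kmul G P) G) O) lambda <->
    (lambda = 1 \/ ((1 < #|O|)%N /\ lambda = 1 - abar pi P O)).
Proof.
move=> O G lambda.
set M := restriction_chain _ _.
set a := abar pi P O.
set m := massR pi O.
set n := #|O|.
have x0O : x0 \in O by exact: orbit_refl.
have m_gt0 : 0 < m.
  rewrite /m /massR (bigD1 x0) //=.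
  have h1 := pi_pos x0.
  have h2 : 0 <= \sum_(i in O | i != x0) pi i by apply: sumr_ge0 => z _; apply: ltW.
  lra.
have m_neq0 : m != 0 by rewrite gt_eqF.
pose q (j : 'I_n) := pi (enum_val j) / m.
have sq : \sum_(j < n) q j = 1.
  by rewrite /q -(big_enum_val (fun z => pi z / m)) /= -mulr_suml mulfV.
have Mij i j : M i j = (1 - a) * (i == j)%:R + a * q j.
  rewrite /M /restriction_chain mxE /=.
  have eO : enum_val i \in O := enum_valP i.
  case: eqP => [<-|/eqP ne].
    under eq_bigr => z /andP[zO _] do rewrite (K_val pi P eO zO).
    rewrite -mulr_sumr -mulr_suml.
    have : m = pi (enum_val i) + \sum_(z in O | z != enum_val i) pi z.
      by rewrite /m /massR (bigD1 (enum_val i)).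
    move=> hm.
    have -> : \sum_(z in O | z != enum_val i) pi z = m - pi (enum_val i) by rewrite hm; ring.
    rewrite /q -/O -/m -/a /= mulr1; field; exact: m_neq0.
  by rewrite (K_val pi P eO (enum_valP j)) /q -/O -/m -/a /= mulr0 add0r.
have vM (v : 'rV[R]_n) : v *m M = (1 - a) *: v + (a * \sum_i v 0 i) *: \row_j q j.
  apply/rowP => j; rewrite !mxE.
  under eq_bigr do rewrite Mij mulrDr.
  rewrite big_split /= (bigD1 j) //= big1 => [|i /negbTE ->]; last by rewrite mulr0 mulr0.
  rewrite eqxx addr0 /= mulr1 -mulr_suml; ring.
pose s (v : 'rV[R]_n) := \sum_i v 0 i.
split.
- move/eigenvalueP => [v Ev vn0].
  have [->|l1] := eqVneq lambda 1; first by left.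
  right.
  have sv : s v = 0.
    have := congr1 s Ev; rewrite vM /s.
    under eq_bigr do rewrite !mxE.
    under [in X in _ = X -> _]eq_bigr do rewrite !mxE.
    rewrite big_split /= -!mulr_sumr sq mulr1 -/(s v) => h.
    apply/eqP; move: l1; apply: contraNT => hs.
    apply/eqP; apply: (mulIf hs); rewrite -h; ring.
  have Ev2 : (lambda - (1 - a)) *: v = 0.
    by rewrite scalerBl -Ev vM -/(s v) sv mulr0 scale0r addr0 subrr.
  move/eqP: Ev2; rewrite scaler_eq0 (negbTE vn0) orbF subr_eq0 => /eqP ->.
  split => //.
  rewrite ltnNge; apply/negP => hn; move/eqP: vn0; apply.
  apply/rowP => j; rewrite mxE -sv /s (bigD1 j) //= big_pred0 ?addr0 // => i.
  apply/negbTE; rewrite negbK; apply/eqP/val_inj.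
  change (nat_of_ord i = nat_of_ord j).
  by move: (ltn_ord i) (ltn_ord j) hn; rewrite -/n; lia.
- move=> H; apply/eigenvalueP.
  have n_gt0 : (0 < n)%N by apply/card_gt0P; exists x0.
  case: H => [->|[n1 ->]].
    exists (\row_j q j).
      by rewrite vM; under eq_bigr do rewrite mxE; rewrite sq mulr1 -scalerDl subrK scale1r.
    apply/eqP => /rowP /(_ (Ordinal n_gt0)); rewrite !mxE /q => /eqP.
    by rewrite mulf_eq0 invr_eq0 (negbTE m_neq0) orbF gt_eqF.
  pose i0 : 'I_n := Ordinal n_gt0.
  pose i1 : 'I_n := Ordinal n1.
  exists (\row_j ((j == i0)%:R - (j == i1)%:R)).
    rewrite vM.
    have -> : \sum_i (\row_j (((j == i0)%:R - (j == i1)%:R) : R)) 0 i = 0.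
      under eq_bigr do rewrite mxE.
      have ind k : \sum_(i < n) ((i == k)%:R : R) = 1.
        by rewrite (bigD1 k) //= eqxx big1 ?addr0 // => i /negbTE ->.
      by rewrite sumrB !ind subrr.
    by rewrite mulr0 scale0r addr0.
  apply/eqP => /rowP /(_ i0); rewrite !mxE eqxx.
  have -> : (i0 == i1) = false by [].
  by move/eqP; rewrite subr0 oner_eq0.
Qed.
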